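(* Let $K,\Delta K\in\mathbb{R}^{(m+n)\times(m+n)}$ be symmetric, suppose $K+\Delta K=\widetilde LJ_{m+n}\widetilde L^T$ is a generalized Cholesky factorization, and suppose $|\Delta K|\le\varepsilon|\widetilde L||\widetilde L^T|$ entrywise for some $\varepsilon\ge0$ with $\mathrm{cond}_F(\widetilde L)\,\mathrm{cond}_F(\widetilde L^{-T})\,\varepsilon<\tfrac12$. Then $K$ has a generalized Cholesky factorization $K=LJ_{m+n}L^T$ such that, with $\Delta L=\widetilde L-L$, $$\|\widetilde L^{-1}\Delta L\|_F\le\frac{1}{\sqrt2}\left(1-\sqrt{1-2\,\mathrm{cond}_F(\widetilde L)\,\mathrm{cond}_F(\widetilde L^{-T})\,\varepsilon}\right).$$
   Context: $J_{m+n}=\begin{bmatrix} I_m&0\\0&-I_n\end{bmatrix}$. A generalized Cholesky factorization of $M\in\mathbb{R}^{(m+n)\times(m+n)}$ is $M=LJ_{m+n}L^T$ with $L=\begin{bmatrix}L_{11}&0\\L_{21}&L_{22}\end{bmatrix}$, $L_{11}\in\mathbb{R}^{m\times m}$, $L_{22}\in\mathbb{R}^{n\times n}$ nonsingular lower triangular, $L_{21}\in\mathbb{R}^{n\times m}$. For $X=(x_{ij})$, $|X|=(|x_{ij}|)$; matrix inequalities are entrywise. For nonsingular $X$, $\mathrm{cond}_F(X)=\|\,|X^{-1}|\,|X|\,\|_F$, and $\widetilde L^{-T}=(\widetilde L^{-1})^T$. $\|\cdot\|_F$ is the Frobenius norm. *)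

(* Defs.v *)
(* real numbers are modelled by an arbitrary real closed field. *)
From HB Require Import structures.
From mathcomp Require Import all_boot all_order all_algebra.
Set Implicit Arguments. Unset Strict Implicit. Unset Printing Implicit Defensive.
Import Order.TTheory GRing.Theory Num.Theory.
Local Open Scope ring_scope.

Definition Jmx (R : rcfType) (m n : nat) : 'M[R]_(m + n) :=
  block_mx 1%:M 0 0 (- 1%:M).

Definition absmx (R : rcfType) (p q : nat) (X : 'M[R]_(p, q)) : 'M[R]_(p, q) :=
  map_mx (fun x => `|x|) X.

Definition frob (R : rcfType) (p q : nat) (X : 'M[R]_(p, q)) : R :=
  Num.sqrt (\sum_(i < p) \sum_(j < q) X i j ^+ 2).

Definition condF (R : rcfType) (p : nat) (X : 'M[R]_p) : R :=
  frob (absmx (invmx X) *m absmx X).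

(* L has the block form [L11 0; L21 L22] with L11, L22 nonsingular lower
   triangular (is_trig_mx A <-> A i j = 0 for i < j, i.e. lower triangular). *)
Definition gen_chol_factor (R : rcfType) (m n : nat) (L : 'M[R]_(m + n)) : Prop :=
  exists (L11 : 'M[R]_m) (L21 : 'M[R]_(n, m)) (L22 : 'M[R]_n),
    [/\ L = block_mx L11 0 L21 L22,
        is_trig_mx L11, is_trig_mx L22,
        L11 \in unitmx & L22 \in unitmx].

Definition is_gen_chol (R : rcfType) (m n : nat) (M L : 'M[R]_(m + n)) : Prop :=
  gen_chol_factor L /\ M = L *m Jmx R m n *m L^T.

(* Main.v *)
Require Import Defs.
From HB Require Import structures.
From mathcomp Require Import all_boot all_order all_algebra.
From mathcomp Require Import ring lra zify.
Import Order.TTheory GRing.Theory Num.Theory.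
Local Open Scope ring_scope.
Set Implicit Arguments. Unset Strict Implicit.

Section SQ.
Variable R : rcfType.

Lemma CS (I : finType) (f g : I -> R) :
  (\sum_i f i * g i) ^+ 2 <= (\sum_i f i ^+ 2) * (\sum_i g i ^+ 2).
Proof.
have H0 : 0 <= \sum_i \sum_j (f i * g j - f j * g i) ^+ 2.
  by apply: sumr_ge0 => i _; apply: sumr_ge0 => j _; apply: sqr_ge0.
have H1 : \sum_i \sum_j (f i * g j - f j * g i) ^+ 2 =
   \sum_i \sum_j (f i ^+ 2 * g j ^+ 2) + \sum_i \sum_j (f j ^+ 2 * g i ^+ 2)
   - 2 * \sum_i \sum_j (f i * g i) * (f j * g j).
  rewrite -big_split /= mulr_sumr -sumrB; apply: eq_bigr => i _.
  rewrite -big_split /= mulr_sumr -sumrB; apply: eq_bigr => j _.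
  ring.
have H2 : \sum_i \sum_j (f i ^+ 2 * g j ^+ 2) = (\sum_i f i ^+ 2) * (\sum_i g i ^+ 2).
  by rewrite mulr_suml; apply: eq_bigr => i _; rewrite mulr_sumr.
have H3 : \sum_i \sum_j (f j ^+ 2 * g i ^+ 2) = (\sum_i f i ^+ 2) * (\sum_i g i ^+ 2).
  by rewrite exchange_big /= H2.
have H4 : \sum_i \sum_j (f i * g i) * (f j * g j) = (\sum_i f i * g i) ^+ 2.
  by rewrite expr2 mulr_suml; apply: eq_bigr => i _; rewrite mulr_sumr.
rewrite H1 H2 H3 H4 in H0; lra.
Qed.

Definition sq p q (X : 'M[R]_(p, q)) : R := \sum_i \sum_j X i j ^+ 2.

Lemma sq_ge0 p q (X : 'M[R]_(p, q)) : 0 <= sq X.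
Proof. by apply: sumr_ge0 => i _; apply: sumr_ge0 => j _; apply: sqr_ge0. Qed.

Lemma sq_tr p q (X : 'M[R]_(p, q)) : sq X^T = sq X.
Proof. by rewrite /sq exchange_big; apply: eq_bigr => i _; apply: eq_bigr => j _; rewrite mxE. Qed.

Lemma sq_le p q (X Y : 'M[R]_(p, q)) :
  (forall i j, X i j ^+ 2 <= Y i j ^+ 2) -> sq X <= sq Y.
Proof. by move=> H; apply: ler_sum => i _; apply: ler_sum => j _; apply: H. Qed.

Lemma entry_le_sq p q (X : 'M[R]_(p, q)) i j : X i j ^+ 2 <= sq X.
Proof.
rewrite /sq (bigD1 i) //= (bigD1 j) //= -addrA lerDl.
apply: addr_ge0; first by apply: sumr_ge0 => k _; apply: sqr_ge0.
by apply: sumr_ge0 => k _; apply: sumr_ge0 => l _; apply: sqr_ge0.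
Qed.

Lemma sq_mul p q r (A : 'M[R]_(p, q)) (B : 'M[R]_(q, r)) :
  sq (A *m B) <= sq A * sq B.
Proof.
apply: (@le_trans _ _ (\sum_i \sum_j ((\sum_k A i k ^+ 2) * (\sum_k B k j ^+ 2)))).
  apply: ler_sum => i _; apply: ler_sum => j _; rewrite mxE; exact: CS.
rewrite /sq mulr_suml; apply: ler_sum => i _.
rewrite -mulr_sumr [X in _ * X <= _](exchange_big) /=.
by rewrite le_eqVlt; apply/orP; left; apply/eqP.
Qed.

Lemma CS2 p q (A B : 'M[R]_(p, q)) :
  (\sum_i \sum_j A i j * B i j) ^+ 2 <= sq A * sq B.
Proof.
rewrite /sq !pair_big /=.
exact: (CS (fun x : 'I_p * 'I_q => A x.1 x.2) (fun x => B x.1 x.2)).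
Qed.

Lemma sq_add p q (A B : 'M[R]_(p, q)) :
  sq (A + B) <= (Num.sqrt (sq A) + Num.sqrt (sq B)) ^+ 2.
Proof.
have -> : sq (A + B) = sq A + 2 * (\sum_i \sum_j A i j * B i j) + sq B.
  rewrite /sq mulr_sumr -!big_split /=; apply: eq_bigr => i _.
  rewrite mulr_sumr -!big_split /=; apply: eq_bigr => j _; rewrite mxE; ring.
set c := \sum_i \sum_j A i j * B i j.
have hA := sq_ge0 A; have hB := sq_ge0 B.
have sA := sqr_sqrtr hA; have sB := sqr_sqrtr hB.
have gA := sqrtr_ge0 (sq A); have gB := sqrtr_ge0 (sq B).
have hc : c ^+ 2 <= (Num.sqrt (sq A) * Num.sqrt (sq B)) ^+ 2.
  by rewrite exprMn sA sB; apply: CS2.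
have hc' : c <= Num.sqrt (sq A) * Num.sqrt (sq B).
  have := mulr_ge0 gA gB; nra.
rewrite sqrrD sA sB; lra.
Qed.

Lemma sq_scale p q (a : R) (A : 'M[R]_(p, q)) : sq (a *: A) = a ^+ 2 * sq A.
Proof.
rewrite /sq mulr_sumr; apply: eq_bigr => i _; rewrite mulr_sumr; apply: eq_bigr => j _.
by rewrite mxE exprMn.
Qed.

End SQ.

Lemma arL1 (x y a b N : nat) : (x < N)%N -> (a < N)%N -> (y * N + x = b * N + a)%N -> y = b /\ x = a.
Proof. move=> h1 h2 h3; have e : y = b by nia. by subst; split => //; lia. Qed.
Lemma arL2 (x y b N : nat) : (y * N + x < b * N + x)%N -> (y < b)%N.
Proof. move=> *; nia. Qed.
Lemma arL3 (x a b N : nat) : (x < N)%N -> (a < N)%N -> (b <= a)%N -> (a * N + x < b * N + a)%N -> (a <= x)%N -> False.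
Proof. move=> *; nia. Qed.
Lemma arL4 (x y N : nat) : (x < N)%N -> (y < N)%N -> (y * N + x < N * N)%N.
Proof. move=> *; nia. Qed.

Section Core.
Variable R : rcfType.
Variable p : nat.
Variables (E J : 'M[R]_p).
Hypothesis HE : E^T = E.
Hypothesis HJd : forall i j, i != j -> J i j = 0.
Hypothesis HJ2 : forall i, J i i ^+ 2 = 1.

Definition low_c (a b : 'I_p) : R := if a == b then 2^-1 else 1.
Definition lowmx (S : 'M[R]_p) : 'M[R]_p :=
  \matrix_(a < p, b < p) (if (nat_of_ord b <= nat_of_ord a)%N then low_c a b * S a b else 0).
Definition Phi (Y : 'M[R]_p) : 'M[R]_p := lowmx (E + Y *m J *m Y^T).
Definition mask (k : nat) (Y : 'M[R]_p) : 'M[R]_p :=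
  \matrix_(a < p, b < p) (if ((nat_of_ord b * p + nat_of_ord a < k)%N && (nat_of_ord b <= nat_of_ord a)%N) then Y a b else 0).

Lemma mulJ_l (Y : 'M[R]_p) a z : (Y *m J) a z = Y a z * J z z.
Proof.
rewrite mxE (bigD1 z) //= big1 ?addr0 // => w wz.
by rewrite HJd ?mulr0.
Qed.

Lemma mulJ_entry (Y Z : 'M[R]_p) a b :
  (Y *m J *m Z^T) a b = \sum_z Y a z * J z z * Z b z.
Proof. by rewrite mxE; apply: eq_bigr => z _; rewrite mulJ_l mxE. Qed.

Lemma sq_YJ (Y : 'M[R]_p) : sq (Y *m J) = sq Y.
Proof.
by apply: eq_bigr => i _; apply: eq_bigr => j _; rewrite mulJ_l exprMn HJ2 mulr1.
Qed.

Lemma JT : J^T = J.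
Proof.
apply/matrixP => i j; rewrite mxE; case: (eqVneq i j) => [->//|ij].
by rewrite !HJd // eq_sym.
Qed.

Lemma JJ : J *m J = 1%:M.
Proof.
apply/matrixP => i j; rewrite mulJ_l mxE; case: (eqVneq i j) => [->|ij].
  by rewrite -expr2 HJ2.
by rewrite HJd // mul0r.
Qed.

Lemma symS (Y : 'M[R]_p) : (E + Y *m J *m Y^T)^T = E + Y *m J *m Y^T.
Proof. by rewrite raddfD /= HE !trmx_mul trmxK JT mulmxA. Qed.

Lemma sq_low (S : 'M[R]_p) : S^T = S -> sq (lowmx S) <= sq S / 2.
Proof.
move=> HS.
have pw : forall i j, (lowmx S) i j ^+ 2 + (lowmx S)^T i j ^+ 2 <= S i j ^+ 2.
  move=> i j; have Sji : S j i = S i j by rewrite -{1}HS mxE.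
  rewrite !mxE /low_c; case: (ltngtP i j) => h.
  - rewrite /=; have -> : (j == i) = false.
      by apply/negbTE; apply/eqP => e; move: h; rewrite e ltnn.
    by rewrite Sji mul1r expr0n /= add0r.
  - rewrite /=; have -> : (i == j) = false.
      by apply/negbTE; apply/eqP => e; move: h; rewrite e ltnn.
    by rewrite mul1r expr0n /= addr0.
  - have e : i = j by apply: val_inj.
    rewrite e eqxx; nra.
have : sq (lowmx S) + sq (lowmx S)^T <= sq S.
  rewrite /sq -big_split /=; apply: ler_sum => i _; rewrite -big_split /=.
  by apply: ler_sum => j _; apply: pw.
rewrite sq_tr; lra.
Qed.

Lemma sq_mask k Y : sq (mask k Y) <= sq Y.
Proof.
apply: sq_le => i j; rewrite mxE; case: ifP => _ //; rewrite expr0n /=.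
exact: sqr_ge0.
Qed.

Variables (d r0 : R).
Hypothesis hd : 0 <= d.
Hypothesis hr0 : 0 <= r0.
Hypothesis hEd : sq E <= d ^+ 2.
Hypothesis hdr : (d + r0 ^+ 2) ^+ 2 <= 2 * r0 ^+ 2.

Lemma sq_Phi Y : sq Y <= r0 ^+ 2 -> sq (Phi Y) <= r0 ^+ 2.
Proof.
move=> hY.
have h1 := sq_low (symS Y).
have h2 := sq_add E (Y *m J *m Y^T).
have h3 : Num.sqrt (sq E) <= d.
  by rewrite -(ger0_norm hd) -sqrtr_sqr ler_sqrt // sqr_ge0.
have h4 : Num.sqrt (sq (Y *m J *m Y^T)) <= sq Y.
  rewrite -(ger0_norm (sq_ge0 Y)) -sqrtr_sqr ler_sqrt ?sqr_ge0 //.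
  by have := sq_mul (Y *m J) Y^T; rewrite sq_YJ sq_tr -expr2.
have g1 := sqrtr_ge0 (sq E); have g2 := sqrtr_ge0 (sq (Y *m J *m Y^T)).
have g3 := sq_ge0 Y.
have h5 : (Num.sqrt (sq E) + Num.sqrt (sq (Y *m J *m Y^T))) ^+ 2 <= (d + r0 ^+ 2) ^+ 2.
  rewrite ler_sqr ?nnegrE; [lra|lra|have := sqr_ge0 r0; lra].
rewrite /Phi; apply: (le_trans h1); rewrite ler_pdivrMr ?ltr0n //.
by rewrite mulrC; apply: (le_trans h2); apply: (le_trans h5).
Qed.


Lemma mask0 Y : mask 0 Y = 0.
Proof. by apply/matrixP => a b; rewrite !mxE ltn0. Qed.

Lemma sq0 : sq (0 : 'M[R]_p) = 0.
Proof. by rewrite /sq big1 // => i _; rewrite big1 // => j _; rewrite mxE expr0n. Qed.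

Lemma exists_mask k : (k <= p * p)%N ->
  exists P, mask k (Phi P) = P /\ sq P <= r0 ^+ 2.
Proof.
elim: k => [|k IH] hk.
  by exists 0; rewrite mask0 sq0; split => //; apply: sqr_ge0.
have [P [HP HsP]] := IH (ltnW hk).
have hp : (0 < p)%N by case: p hk => //.
have ha : (k %% p < p)%N := ltn_pmod k hp.
have hb : (k %/ p < p)%N by rewrite ltn_divLR.
pose a := Ordinal ha; pose b := Ordinal hb.
have hk' : k = (nat_of_ord b * p + nat_of_ord a)%N by rewrite /= {1}(divn_eq k p).
have rk : forall x y : 'I_p, (nat_of_ord y * p + nat_of_ord x == k)%N = (x == a) && (y == b).
  move=> x y; apply/eqP/andP => [H|[/eqP-> /eqP->]]; last by rewrite hk'.
  have hx := ltn_ord x; have hax := ltn_ord a.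
  rewrite hk' in H; have [e1 e2] := arL1 hx hax H.
  by split; apply/eqP/val_inj.
have rank_eq : forall x y : 'I_p, (nat_of_ord y * p + nat_of_ord x < k.+1)%N =
   (nat_of_ord y * p + nat_of_ord x < k)%N || ((x == a) && (y == b)).
  by move=> x y; rewrite ltnS leq_eqVlt orbC rk.
have F1 : forall x y : 'I_p, ~~ ((nat_of_ord y * p + nat_of_ord x < k)%N && (nat_of_ord y <= nat_of_ord x)%N) -> P x y = 0.
  by move=> x y H; rewrite -HP mxE (negbTE H).
have Pab : P a b = 0 by apply: F1; rewrite -hk' ltnn.
case: (leqP (nat_of_ord b) (nat_of_ord a)) => hba; last first.
  exists P; split => //; rewrite -[RHS]HP; apply/matrixP => x y; rewrite !mxE rank_eq.
  case: (eqVneq x a) => [->|xa]; case: (eqVneq y b) => [->|yb]; rewrite ?orbF ?andbF //=.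
  by rewrite orbT /= leqNgt hba andbF.
pose D : 'M[R]_p := delta_mx a b.
pose Ps s := P + s *: D.
have PsE : forall s x z, Ps s x z = P x z + s * ((x == a) && (z == b))%:R.
  by move=> s x z; rewrite !mxE.
have F2 : forall s, mask k (Phi (Ps s)) = P.
  move=> s; rewrite -[RHS]HP; apply/matrixP => x y; rewrite !mxE.
  case hxy: (_ && _) => //.
  move/andP: hxy => [hr hyx]; rewrite hyx; congr (_ * (_ + _)).
  apply: eq_bigr => z _; rewrite !mulJ_l [(Ps s)^T _ _]mxE [P^T _ _]mxE !PsE.
  case: (eqVneq z b) => [->|zb]; last by rewrite !andbF !mulr0 !addr0.
  have hx := ltn_ord x; have hy := ltn_ord y; have hax := ltn_ord a.
  case: (eqVneq x a) => [xa|xa]; case: (eqVneq y a) => [ya|ya].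
  - exfalso; rewrite xa ya hk' in hr; have := arL2 hr; rewrite ltnNge hba //.
  - have hyb : (nat_of_ord y < nat_of_ord b)%N by rewrite xa hk' in hr; apply: arL2 hr.
    have -> : P y b = 0 by apply: F1; rewrite negb_and -!ltnNge hyb orbT.
    by rewrite /= !mulr0 add0r mulr0.
  - exfalso; rewrite ya hk' in hr hyx; exact: (arL3 hx hax hba hr hyx).
  - by rewrite /= !mulr0 !addr0.
have F3 : forall s, mask k.+1 (Phi (Ps s)) = P + (Phi (Ps s) a b) *: D.
  move=> s; apply/matrixP => x y; rewrite [LHS]mxE [RHS]mxE [in RHS]mxE /D [delta_mx _ _ _ _]mxE rank_eq.
  have M2 := F2 s; move/matrixP: M2 => /(_ x y); rewrite mxE => M2.
  case: (eqVneq x a) => [xa|xa]; case: (eqVneq y b) => [yb|yb]; rewrite /= ?orbF ?andbF ?mulr0 ?addr0 //.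
  by rewrite xa yb orbT hba Pab add0r mulr1.
have F4 : forall t, sq (P + t *: D) = sq P + t ^+ 2.
  move=> t; rewrite /sq.
  have -> : \sum_i \sum_j (P + t *: D) i j ^+ 2 =
      \sum_i \sum_j (P i j ^+ 2 + (if (i == a) && (j == b) then t ^+ 2 else 0)).
    apply: eq_bigr => i _; apply: eq_bigr => j _; rewrite !mxE.
    case: (eqVneq i a) => [->|ia]; case: (eqVneq j b) => [->|jb];
      rewrite /= ?Pab; [ring| by rewrite mulr0 !addr0 ..].
  under eq_bigr do rewrite big_split /=.
  rewrite big_split /=; congr (_ + _).
  rewrite (bigD1 a) //= [X in _ + X]big1 ?addr0 => [|i ia]; last first.
    by rewrite big1 // => j _; rewrite (negbTE ia).
  rewrite (bigD1 b) //= [X in _ + X]big1 ?addr0 ?eqxx // => j jb.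
  by rewrite (negbTE jb) andbF.
pose Q : 'M[{poly R}]_p := map_mx polyC P + 'X *: map_mx polyC D.
pose qm : 'M[{poly R}]_p := map_mx polyC E + Q *m map_mx polyC J *m Q^T.
pose phi : {poly R} := (low_c a b)%:P * qm a b.
have ev : forall s, phi.[s] = Phi (Ps s) a b.
  move=> s; rewrite /Phi [RHS]mxE hba hornerM hornerC; congr (_ * _).
  have mC : forall M : 'M[R]_p, map_mx (horner_eval s) (map_mx polyC M) = M.
    by move=> M; apply/matrixP => i j; rewrite !mxE /horner_eval hornerC.
  have mQ : map_mx (horner_eval s) Q = Ps s.
    apply/matrixP => i j; rewrite !mxE /horner_eval !hornerE.
    by rewrite mulrC.
  have : (map_mx (horner_eval s) qm) a b = (E + Ps s *m J *m (Ps s)^T) a b.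
    by rewrite /qm map_mxD !map_mxM -map_trmx mQ !mC.
  by rewrite mxE.
clearbody phi.
pose r := Num.sqrt (r0 ^+ 2 - sq P).
have hr : 0 <= r0 ^+ 2 - sq P by rewrite subr_ge0.
have r2 : r ^+ 2 = r0 ^+ 2 - sq P by rewrite sqr_sqrtr.
have r_ge0 : 0 <= r := sqrtr_ge0 _.
have selfmap : forall s, -r <= s <= r -> -r <= phi.[s] <= r.
  move=> s /andP[s1 s2].
  have h1 : sq (Ps s) <= r0 ^+ 2 by rewrite /Ps F4; nra.
  have h2 := sq_Phi h1.
  have h3 := le_trans (sq_mask k.+1 _) h2.
  rewrite F3 F4 -ev in h3.
  apply/andP; split; nra.
set h : {poly R} := 'X - phi.
have hrr : -r <= r by lra.
have hsides : h.[-r] <= 0 <= h.[r].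
  rewrite !hornerE.
  have /andP[a1 a2] : -r <= phi.[r] <= r by apply: selfmap; apply/andP; split; lra.
  have /andP[b1 b2] : -r <= phi.[-r] <= r by apply: selfmap; apply/andP; split; lra.
  apply/andP; split; lra.
have [x /andP[x1 x2] rx] := poly_ivt hrr hsides.
have xe : phi.[x] = x.
  by move: rx; rewrite /root !hornerE subr_eq0 => /eqP <-.
exists (Ps x); split.
  by rewrite F3 -ev xe.
by rewrite /Ps F4; nra.
Qed.

Lemma fixed_point : exists X : 'M[R]_p,
  [/\ forall i j : 'I_p, (nat_of_ord i < nat_of_ord j)%N -> X i j = 0,
      X + X^T = E + X *m J *m X^T & sq X <= r0 ^+ 2].
Proof.
have [P [HP HsP]] := exists_mask (leqnn (p * p)).
have PP : Phi P = P.
  rewrite -{2}HP; apply/matrixP => x y; rewrite !mxE.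
  have hx := ltn_ord x; have hy := ltn_ord y.
  rewrite arL4 //.
  by case: ifP.
exists P; split => //.
  by move=> i j hij; rewrite -PP mxE leqNgt hij.
set S := E + P *m J *m P^T.
have HS : S^T = S by apply: symS.
have eP : forall x y, P x y = if (nat_of_ord y <= nat_of_ord x)%N then low_c x y * S x y else 0.
  by move=> x y; rewrite -PP mxE.
apply/matrixP => i j; rewrite [LHS]mxE [P^T _ _]mxE !eP.
have Sji : S j i = S i j by rewrite -{1}HS mxE.
rewrite /low_c; case: (ltngtP i j) => h /=.
- rewrite Sji; have -> : (j == i) = false.
    by apply/negbTE; apply/eqP => e; move: h; rewrite e ltnn.
  by rewrite mul1r add0r.
- have -> : (i == j) = false.
    by apply/negbTE; apply/eqP => e; move: h; rewrite e ltnn.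
  by rewrite mul1r addr0.
- have e : i = j by apply: val_inj.
  by rewrite e eqxx; field.
Qed.

End Core.

Lemma Jmx_d (R : rcfType) m n (i j : 'I_(m + n)) : i != j -> Jmx R m n i j = 0.
Proof.
rewrite /Jmx; case: (split_ordP i) => i' ->; case: (split_ordP j) => j' ->;
  rewrite ?block_mxEul ?block_mxEur ?block_mxEdl ?block_mxEdr ?eq_shift ?mxE //.
- by move/negbTE => ->.
- by move/negbTE => ->; rewrite oppr0.
Qed.

Lemma Jmx_2 (R : rcfType) m n (i : 'I_(m + n)) : Jmx R m n i i ^+ 2 = 1.
Proof.
rewrite /Jmx; case: (split_ordP i) => i' ->;
  rewrite ?block_mxEul ?block_mxEdr !mxE eqxx /=; [exact: expr1n | by rewrite sqrrN expr1n].
Qed.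

Lemma trigM (R : rcfType) p (A B : 'M[R]_p) : is_trig_mx A -> is_trig_mx B ->
  is_trig_mx (A *m B) /\ forall i, (A *m B) i i = A i i * B i i.
Proof.
move=> /is_trig_mxP hA /is_trig_mxP hB; split.
  apply/is_trig_mxP => i j hij; rewrite mxE big1 // => k _.
  case: (ltnP i k) => hik; first by rewrite hA // mul0r.
  by rewrite hB ?mulr0 // (leq_ltn_trans hik hij).
move=> i; rewrite mxE (bigD1 i) //= big1 ?addr0 // => k ki.
case: (ltngtP i k) => hik; first by rewrite hA // mul0r.
- by rewrite hB ?mulr0.
- by move: ki; rewrite (_ : k = i) ?eqxx //; apply: val_inj.
Qed.

Lemma absM (R : rcfType) p q r (X : 'M[R]_(p, q)) (Y : 'M[R]_(q, r)) i j :
  `|(X *m Y) i j| <= (absmx X *m absmx Y) i j.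
Proof.
rewrite !mxE; apply: (le_trans (ler_norm_sum _ _ _)); apply: ler_sum => k _.
by rewrite normrM !mxE.
Qed.

Unset Implicit Arguments. Set Strict Implicit.

Theorem mainTheorem4 (R : rcfType) (m n : nat) (K dK Lt : 'M[R]_(m + n)) (eps : R) :
  K^T = K -> dK^T = dK ->
  is_gen_chol (K + dK) Lt ->
  0 <= eps ->
  (forall i j, `|dK i j| <= eps * (absmx Lt *m absmx Lt^T) i j) ->
  condF Lt * condF (invmx Lt)^T * eps < 1 / 2 ->
  exists L : 'M[R]_(m + n),
    is_gen_chol K L /\
    frob (invmx Lt *m (Lt - L))
      <= (1 - Num.sqrt (1 - 2 * (condF Lt * condF (invmx Lt)^T * eps)))
         / Num.sqrt 2.
Proof.
move=> HK HdK [[L11 [L21 [L22 [HLt T11 T22 U11 U22]]]] HKL] heps Hbd Hc.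
have Jd := @Jmx_d R m n; have J2 := @Jmx_2 R m n.
set J := Jmx R m n in HKL Jd J2 *.
have Ltrig : is_trig_mx Lt by rewrite HLt is_trig_block_mx // eqxx T11 T22.
have Lunit : Lt \in unitmx by rewrite unitmxE HLt det_lblock unitrM -!unitmxE U11 U22.
set A := invmx Lt in Hc *.
set E := A *m dK *m A^T.
have HE : E^T = E by rewrite /E !trmx_mul trmxK HdK mulmxA.
have dKE : dK = Lt *m E *m Lt^T.
  rewrite /E !mulmxA mulmxV // mul1mx -mulmxA -trmx_mul mulmxV // trmx1 mulmx1 //.
set c1 := condF Lt in Hc *; set c2 := condF A^T in Hc *; set del := c1 * c2 * eps in Hc *.
set M1 := absmx A *m absmx Lt; set M2 := absmx Lt^T *m absmx A^T.
have c1E : c1 = Num.sqrt (sq M1) by [].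
have c2E : c2 = Num.sqrt (sq M2) by rewrite /c2 /condF -trmx_inv invmxK.
have del0 : 0 <= del by rewrite /del c1E c2E; apply: mulr_ge0 => //; apply: mulr_ge0; apply: sqrtr_ge0.
have entE : forall i j, `|E i j| <= eps * (M1 *m M2) i j.
  move=> i j; apply: (le_trans (absM _ _ _ _)).
  have -> : M1 *m M2 = absmx A *m (absmx Lt *m absmx Lt^T) *m absmx A^T by rewrite /M1 /M2 !mulmxA.
  rewrite [X in X <= _]mxE [X in _ <= eps * X]mxE mulr_sumr; apply: ler_sum => l _.
  rewrite mulrA; apply: ler_wpM2r; first by rewrite mxE normr_ge0.
  rewrite [X in X <= _]mxE; apply: (le_trans (absM _ _ _ _)).
  rewrite [X in X <= _]mxE [X in _ <= eps * X]mxE mulr_sumr; apply: ler_sum => k _.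
  rewrite mulrCA; apply: ler_wpM2l; first by rewrite mxE normr_ge0.
  by rewrite mxE Hbd.
have hEd : sq E <= del ^+ 2.
  apply: (@le_trans _ _ (sq (eps *: (M1 *m M2)))).
    apply: sq_le => i j; rewrite [(eps *: (M1 *m M2)) i j]mxE.
    have h1 := entE i j; have h2 := normr_ge0 (E i j).
    rewrite -(@real_normK _ (E i j)) ?num_real //; nra.
  rewrite sq_scale /del c1E c2E !exprMn !sqr_sqrtr ?sq_ge0 //.
  rewrite [X in _ <= X]mulrC; apply: ler_wpM2l; first exact: sqr_ge0.
  exact: sq_mul.
set s := Num.sqrt (1 - 2 * del).
set t := Num.sqrt (2 : R).
set r0 := (1 - s) / t.
have hs0 : 0 <= 1 - 2 * del by lra.
have s2 : s ^+ 2 = 1 - 2 * del by rewrite sqr_sqrtr.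
have s0 : 0 <= s := sqrtr_ge0 _.
have t2 : t ^+ 2 = 2 by rewrite sqr_sqrtr ?ler0n.
have t0 : 0 < t by rewrite sqrtr_gt0 ltr0n.
have r02 : r0 ^+ 2 = (1 - s) ^+ 2 / 2 by rewrite /r0 expr_div_n t2.
have hdr : (del + r0 ^+ 2) ^+ 2 <= 2 * r0 ^+ 2.
  have e1 : del + r0 ^+ 2 = 1 - s by rewrite r02; nra.
  by rewrite e1 r02 mulrC divfK ?pnatr_eq0.
have r0lt1 : r0 ^+ 2 < 1 by rewrite r02; nra.
have r0ge0 : 0 <= r0 by rewrite /r0 divr_ge0 ?(ltW t0) //; nra.
have [X [Xl XX Xs]] := fixed_point HE Jd J2 del0 hEd hdr.
set M := 1%:M - X *m J.
have Ment : forall i j, M i j = (1%:M : 'M[R]_(m+n)) i j - X i j * J j j.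
  by move=> i j; rewrite -(mulJ_l Jd) /M !mxE.
have Mtrig : is_trig_mx M.
  apply/is_trig_mxP => i j hij; rewrite Ment Xl // mul0r subr0 mxE.
  by rewrite (_ : (i == j) = false) //; apply/negbTE; apply/eqP => e; move: hij; rewrite e ltnn.
have Mdiag : forall i, M i i != 0.
  move=> i; rewrite Ment mxE eqxx /= subr_eq0.
  apply/eqP => h.
  have hX := le_lt_trans (le_trans (entry_le_sq X i i) Xs) r0lt1.
  have e : (X i i * J i i) ^+ 2 = 1 by rewrite -h expr1n.
  by rewrite exprMn J2 mulr1 in e; rewrite e ltxx in hX.
have [Lttrig Ltd] := trigM Ltrig Mtrig.
have Ltdiag : forall i, Lt i i != 0.
  move: Lunit; rewrite unitmxE det_trig // unitfE => /prodf_neq0 H i.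
  exact: H.
set L := Lt *m M.
have Ldiag : forall i, L i i != 0 by move=> i; rewrite Ltd mulf_neq0.
have XJE : X + X^T - X *m J *m X^T = E by rewrite XX addrK.
have LJL : K = L *m J *m L^T.
  have e1 : M *m J *m M^T = J - E.
    have h1 : (1%:M - X *m J) *m J = J - X by rewrite mulmxBl mul1mx -mulmxA (JJ Jd J2) mulmx1.
    have h2 : (1%:M - X *m J)^T = 1%:M - J *m X^T by rewrite raddfB /= trmx1 trmx_mul (JT Jd).
    rewrite /M h1 h2 mulmxBr mulmx1 mulmxBl !mulmxA (JJ Jd J2) mul1mx -XJE.
    by rewrite !opprB !opprD !addrA (addrAC J (X *m J *m X^T)).
  have e2 : K = Lt *m J *m Lt^T - dK by rewrite -HKL addrK.
  have e3 : L *m J *m L^T = Lt *m (M *m J *m M^T) *m Lt^T by rewrite /L trmx_mul !mulmxA.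
  by rewrite e2 e3 e1 mulmxBr mulmxBl -dKE.
exists L; split.
  split => //.
  exists (ulsubmx L), (dlsubmx L), (drsubmx L); split.
  - by rewrite -{1}(submxK L) (ursubmx_trig (leqnn m) Lttrig).
  - exact: ulsubmx_trig.
  - exact: drsubmx_trig.
  - rewrite unitmxE det_trig ?ulsubmx_trig // unitfE; apply/prodf_neq0 => i _.
    by rewrite mxE [usubmx _ _ _]mxE Ldiag.
  - rewrite unitmxE det_trig ?drsubmx_trig // unitfE; apply/prodf_neq0 => i _.
    by rewrite mxE [dsubmx _ _ _]mxE Ldiag.
have -> : A *m (Lt - L) = X *m J.
  have -> : Lt - L = Lt *m (X *m J) by rewrite /L /M mulmxBr mulmx1 opprB addrC subrK.
  by rewrite !mulmxA /A mulVmx // mul1mx.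
rewrite /frob -/(sq (X *m J)) (sq_YJ Jd J2).
rewrite -(ger0_norm r0ge0) -sqrtr_sqr ler_sqrt //; exact: sqr_ge0.
Qed.
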